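(* Let $d$ be a Hardy type series derivation on $\mathbb{K}$. Let $\alpha\in\Gamma$ with $\alpha\neq\hat\theta$ (this condition being vacuous if $\hat\theta$ does not exist). Then there exists a unique fundamental monomial $\psi_\alpha\in\Phi$ such that $\mathrm{LF}\big(\alpha/\theta^{(\psi_\alpha)}\big)=\psi_\alpha$.
   Context: Let $(\Phi,\preccurlyeq)$ be a totally ordered set; $\mathbf{H}(\Phi)$ is the group of formal products $\gamma=\prod_{\phi}\phi^{\gamma_\phi}$, $\gamma_\phi\in\mathbb{R}$, with anti-well-ordered support $\operatorname{supp}\gamma=\{\phi:\gamma_\phi\neq0\}$, pointwise multiplication and anti-lexicographic order ($\gamma\succ1$ iff the exponent of $\max\operatorname{supp}\gamma$ is positive); $\Phi\subseteq\mathbf H(\Phi)$ via $\phi=\phi^1$ (fundamental monomials). Fix a subgroup $\Gamma\supseteq\Phi$. $\mathrm{LF}(\gamma)=\max\operatorname{supp}\gamma$ for $\gamma\ne1$, $\mathrm{LF}(1)=1$. $\mathbb{K}=\mathbb{R}((\Gamma))$: formal series with anti-well-ordered support in $\Gamma$; $\mathrm{LM}(a)$ = largest monomial of the support; $a\preccurlyeq b$ iff $\mathrm{LM}(a)\preccurlyeq\mathrm{LM}(b)$, $a\asymp b$ iff equal leading monomials; $|a|=\max(\mathrm{LM}(a),\mathrm{LM}(a)^{-1})$; $a,b\succ 1$ comparable iff $\mathrm{LF}(\mathrm{LM}(a))=\mathrm{LF}(\mathrm{LM}(b))$. Summable families: union of supports anti-well-ordered, each monomial in finitely many supports. A series derivation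 is a map $a\mapsto a'$ on $\mathbb{K}$ with $1'=0$, $\alpha'=\alpha\sum_{\phi\in\operatorname{supp}\alpha}\alpha_\phi\phi'/\phi$ for $\alpha=\prod\phi^{\alpha_\phi}\in\Gamma$, and $a'=\sum a_\alpha\alpha'$ (summable families). Hardy type: (HD1) constants are exactly $\mathbb{R}$; (HD2) for $a,b\in\mathbb{K}^*$, $a,b\not\asymp 1$: $a\preccurlyeq b\iff a'\preccurlyeq b'$; (HD3) for $|a|\succ|b|\succ1$: $a'/a\succcurlyeq b'/b$, with $\asymp$ iff $a,b$ comparable. $\theta^{(\phi)}=\mathrm{LM}(\phi'/\phi)$ for $\phi\in\Phi$; $\hat\theta$ is the greatest lower bound of $\{\theta^{(\phi)}:\phi\in\Phi\}$ in $(\Gamma,\preccurlyeq)$ if it exists. *)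

(* Defs.v *)
From mathcomp Require Import all_boot all_order all_algebra.
From mathcomp Require Import all_classical all_reals.
Set Implicit Arguments. Unset Strict Implicit. Unset Printing Implicit Defensive.
Import Order.TTheory GRing.Theory Num.Theory.
Local Open Scope classical_set_scope.
Local Open Scope ring_scope.

Section Hardy.
Variables (R : realType) (disp : Order.disp_t) (Phi : orderType disp).

Definition anti_wo {T : Type} (le : T -> T -> Prop) (S : set T) : Prop :=
  forall A : set T, A `<=` S -> A !=set0 -> exists2 m, A m & forall x, A x -> le x m.

(* Monomials: formal products prod_phi phi^(g phi), represented by their
   exponent function g : Phi -> R.  The group law of H(Phi) is pointwise
   addition of exponents. *)
Definition mon := Phi -> R.
Definition msupp (g : mon) : set Phi := [set p | g p != 0].
Definition hahn (g : mon) : Prop := anti_wo (fun x y : Phi => (x <= y)%O) (msupp g).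
Definition mon1 : mon := fun _ => 0.
Definition mmul (g h : mon) : mon := fun p => g p + h p.
Definition minv (g : mon) : mon := fun p => - g p.
Definition mdiv (g h : mon) : mon := fun p => g p - h p.
Definition fund (phi : Phi) : mon := fun p => if p == phi then 1 else 0.

Definition is_LF (g : mon) (phi : Phi) : Prop :=
  g phi != 0 /\ forall p, g p != 0 -> (p <= phi)%O.
(* LF(g) = Some (max supp g) for g <> 1, and None (standing for 1) for g = 1 *)
Definition LF (g : mon) : option Phi :=
  match pselect (exists phi, is_LF g phi) with
  | left h => Some (projT1 (cid h))
  | right _ => None
  end.

Definition mgt1 (g : mon) : Prop := exists phi, is_LF g phi /\ 0 < g phi.
Definition mle (g h : mon) : Prop := g = h \/ mgt1 (mdiv h g).
Definition mlt (g h : mon) : Prop := mle g h /\ g <> h.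
Definition mabs (g : mon) : mon := if `[< mgt1 g >] then g else minv g.

Definition good_group (Gam : set mon) : Prop :=
  [/\ forall g, Gam g -> hahn g,
      Gam mon1,
      forall g h, Gam g -> Gam h -> Gam (mdiv g h)
    & forall phi, Gam (fund phi)].

(* Series: coefficient functions on monomials; K = R((Gam)) is the set of
   those with anti-well-ordered support contained in Gam. *)
Definition ser := mon -> R.
Definition ssupp (a : ser) : set mon := [set g | a g != 0].
Definition is_series (Gam : set mon) (a : ser) : Prop :=
  ssupp a `<=` Gam /\ anti_wo mle (ssupp a).
Definition szero : ser := fun _ => 0.
Definition sscale (r : R) (a : ser) : ser := fun g => r * a g.
Definition mono (g : mon) : ser := fun h => if `[< h = g >] then 1 else 0.
Definition smulm (a : ser) (g : mon) : ser := fun h => a (mdiv h g).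
Definition sdivm (a : ser) (g : mon) : ser := fun h => a (mmul h g).

(* leading monomial (LM 0 := 1 is an irrelevant default) *)
Definition is_LM (a : ser) (g : mon) : Prop :=
  a g != 0 /\ forall h, a h != 0 -> mle h g.
Definition LM (a : ser) : mon :=
  match pselect (exists g, is_LM a g) with
  | left h => projT1 (cid h)
  | right _ => mon1
  end.

Definition summable (Gam : set mon) {I : choiceType} (F : I -> ser) : Prop :=
  anti_wo mle (\bigcup_(i in setT) ssupp (F i)) /\
  forall g, finite_set [set i | F i g != 0].
Definition fsum {I : choiceType} (F : I -> ser) : ser :=
  fun g => \sum_(i \in [set: I]) F i g.

Definition series_derivation (Gam : set mon) (D : ser -> ser) : Prop :=
  [/\ forall a, is_series Gam a -> is_series Gam (D a),
      D (mono mon1) = szero,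
      forall alpha, Gam alpha ->
        let F := fun phi : Phi =>
          sscale (alpha phi) (sdivm (D (mono (fund phi))) (fund phi)) in
        summable Gam F /\ D (mono alpha) = smulm (fsum F) alpha
    & forall a, is_series Gam a ->
        let F := fun g : mon => sscale (a g) (D (mono g)) in
        summable Gam F /\ D a = fsum F].

Definition sle (a b : ser) : Prop := mle (LM a) (LM b).
Definition sasymp (a b : ser) : Prop := LM a = LM b.
Definition constant (a : ser) : Prop := ssupp a `<=` [set mon1].
(* leading monomial of a'/a, i.e. LM(a') / LM(a) *)
Definition LMlogder (D : ser -> ser) (a : ser) : mon := mdiv (LM (D a)) (LM a).

Definition hardy_type (Gam : set mon) (D : ser -> ser) : Prop :=
  [/\
      forall a, is_series Gam a -> (D a = szero <-> constant a),
      forall a b, is_series Gam a -> is_series Gam b ->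
        a <> szero -> b <> szero -> LM a <> mon1 -> LM b <> mon1 ->
        (sle a b <-> sle (D a) (D b))
    &
      forall a b, is_series Gam a -> is_series Gam b ->
        a <> szero -> b <> szero ->
        mlt (mabs (LM b)) (mabs (LM a)) -> mlt mon1 (mabs (LM b)) ->
        mle (LMlogder D b) (LMlogder D a) /\
        (LMlogder D a = LMlogder D b <-> LF (LM a) = LF (LM b))].

Definition theta (D : ser -> ser) (phi : Phi) : mon :=
  LM (sdivm (D (mono (fund phi))) (fund phi)).

Definition is_theta_hat (Gam : set mon) (D : ser -> ser) (t : mon) : Prop :=
  [/\ Gam t,
      forall phi, mle t (theta D phi)
    & forall u, Gam u -> (forall phi, mle u (theta D phi)) -> mle u t].

End Hardy.

(* Main.v *)
Require Import Defs.
From mathcomp Require Import all_boot all_order all_algebra.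
From mathcomp Require Import all_classical all_reals.
From mathcomp Require Import ring lra.
Set Implicit Arguments. Unset Strict Implicit. Unset Printing Implicit Defensive.
Import Order.TTheory GRing.Theory Num.Theory.
Local Open Scope classical_set_scope.
Local Open Scope ring_scope.

Definition smallb {R : realType} {disp} {Phi : orderType disp} (y : mon R Phi) (c : Phi) :=
  forall p, y p != 0 -> (p < c)%O.

Lemma is_LF_uniq {R : realType} {disp} {Phi : orderType disp} (g : mon R Phi) a b :
  is_LF g a -> is_LF g b -> a = b.
Proof. by move=> [ha Ha] [hb Hb]; apply/le_anti; rewrite Hb // Ha. Qed.

Lemma LF_some {R : realType} {disp} {Phi : orderType disp} (g : mon R Phi) a :
  is_LF g a -> LF g = Some a.
Proof.
move=> h; rewrite /LF; case: pselect => [e|n]; last by exfalso; apply: n; exists a.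
by congr Some; apply: is_LF_uniq (projT2 (cid e)) h.
Qed.

Lemma LF_someE {R : realType} {disp} {Phi : orderType disp} (g : mon R Phi) a :
  LF g = Some a -> is_LF g a.
Proof.
rewrite /LF; case: pselect => [e|//] [<-]; exact: (projT2 (cid e)).
Qed.

Lemma M1 {R : realType} {disp} {Phi : orderType disp} (x y z : mon R Phi) c :
  is_LF x c -> smallb y c -> (forall p, z p = x p + y p) -> is_LF z c /\ z c = x c.
Proof.
move=> [hc Hc] hy hz.
have yc : y c = 0 by apply/eqP; apply: contraT => /hy; rewrite ltxx.
have zc : z c = x c by rewrite hz yc addr0.
split=> //; split; first by rewrite zc.
move=> p; rewrite hz; have [xp|xp] := eqVneq (x p) 0.
  by rewrite xp add0r => /hy /ltW.
by move=> _; apply: Hc.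
Qed.

Lemma M2 {R : realType} {disp} {Phi : orderType disp} (x y z : mon R Phi) a b :
  is_LF x a -> 0 < x a -> is_LF y b -> 0 < y b -> (forall p, z p = x p + y p) ->
  exists c, [/\ is_LF z c, 0 < z c, (a <= c)%O & (b <= c)%O].
Proof.
move=> [ha Ha] xa [hb Hb] yb hz.
have sup : forall p, z p != 0 -> x p != 0 \/ y p != 0.
  move=> p; rewrite hz; have [->|] := eqVneq (x p) 0; last by left.
  by rewrite add0r; right.
case: (ltgtP a b) => [ab|ba|eab].
- have xb : x b = 0 by apply/eqP; apply: contraT => /Ha; rewrite leNgt ab.
  exists b; split => //; last exact: ltW.
    split; first by rewrite hz xb add0r.
    by move=> p /sup [/Ha pa|/Hb //]; apply: le_trans pa (ltW ab).
  by rewrite hz xb add0r.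
- have ya : y a = 0 by apply/eqP; apply: contraT => /Hb; rewrite leNgt ba.
  exists a; split => //; last exact: ltW.
    split; first by rewrite hz ya addr0.
    by move=> p /sup [/Ha //|/Hb pb]; apply: le_trans pb (ltW ba).
  by rewrite hz ya addr0.
- subst b; exists a; split => //.
    split; first by rewrite hz gt_eqF // addr_gt0.
    by move=> p /sup [/Ha|/Hb].
  by rewrite hz addr_gt0.
Qed.

Lemma mgt1_neg {R : realType} {disp} {Phi : orderType disp} (x : mon R Phi) a :
  is_LF x a -> x a < 0 -> ~ mgt1 x.
Proof.
move=> h xa [c [hc xc]]; have := is_LF_uniq h hc => ac; subst c.
by move: (lt_trans xa xc); rewrite ltxx.
Qed.

Lemma is_LF_ext {R : realType} {disp} {Phi : orderType disp} (x z : mon R Phi) a :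
  is_LF x a -> (forall p, z p = x p) -> is_LF z a.
Proof. by move=> [h H] e; split; [rewrite e|move=> p; rewrite e; apply: H]. Qed.

Lemma is_LF_neg {R : realType} {disp} {Phi : orderType disp} (x z : mon R Phi) a :
  is_LF x a -> (forall p, z p = - x p) -> is_LF z a.
Proof.
by move=> [h H] e; split; [rewrite e oppr_eq0|move=> p; rewrite e oppr_eq0; apply: H].
Qed.

Lemma mle_anti {R : realType} {disp} {Phi : orderType disp} (x y : mon R Phi) :
  mle x y -> mle y x -> x = y.
Proof.
move=> [//|[a [ha pa]]] [//|[b [hb pb]]].
have hb' : is_LF (mdiv y x) b by apply: (is_LF_neg hb) => p; rewrite /mdiv opprB.
have ab := is_LF_uniq ha hb'; subst b.
by move: pb; rewrite /mdiv -opprB oppr_gt0 => /(lt_trans pa); rewrite ltxx.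
Qed.

Lemma mle_trans {R : realType} {disp} {Phi : orderType disp} (x y z : mon R Phi) :
  mle x y -> mle y z -> mle x z.
Proof.
move=> [<-//|[a [ha pa]]] [<-|[b [hb pb]]]; first by right; exists a.
have e : forall p, mdiv z x p = mdiv y x p + mdiv z y p.
  by move=> p; rewrite /mdiv; ring.
have [c [hc pc _ _]] := M2 ha pa hb pb e.
by right; exists c.
Qed.

Lemma mle_refl {R : realType} {disp} {Phi : orderType disp} (x : mon R Phi) : mle x x.
Proof. by left. Qed.

Lemma mle_transl {R : realType} {disp} {Phi : orderType disp} (x y z : mon R Phi) :
  mle x y -> mle (mmul z x) (mmul z y).
Proof.
move=> [<-|m]; first by left.
right; have -> : mdiv (mmul z y) (mmul z x) = mdiv y x.
  by apply/funext => p; rewrite /mdiv /mmul opprD addrACA subrr add0r.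
exact: m.
Qed.

Lemma mgt1_mle {R : realType} {disp} {Phi : orderType disp} (x : mon R Phi) :
  mgt1 x -> mle (@mon1 R _ Phi) x.
Proof.
move=> m; right; have -> : mdiv x (@mon1 R _ Phi) = x by apply/funext => p; rewrite /mdiv /mon1 subr0.
exact: m.
Qed.

Lemma hahn_LF {R : realType} {disp} {Phi : orderType disp} (x : mon R Phi) p :
  hahn x -> x p != 0 -> exists c, is_LF x c.
Proof.
move=> h xp; have [|c sc Hc] := h (msupp x) (fun _ q => q); first by exists p.
by exists c; split=> // q xq; apply: Hc.
Qed.

Lemma mon_eq {R : realType} {disp} {Phi : orderType disp} (x y : mon R Phi) :
  (forall p, x p = y p) -> x = y.
Proof. by move=> e; apply/funext. Qed.

Lemma gam_div {R : realType} {disp} {Phi : orderType disp} (Gam : set (mon R Phi)) x y :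
  good_group Gam -> Gam x -> Gam y -> Gam (mdiv x y).
Proof. by case=> _ _ h _; apply: h. Qed.

Lemma gam_inv {R : realType} {disp} {Phi : orderType disp} (Gam : set (mon R Phi)) x :
  good_group Gam -> Gam x -> Gam (minv x).
Proof.
move=> hG hx; have -> : minv x = mdiv (@mon1 R _ Phi) x.
  by apply/funext => p; rewrite /minv /mdiv /mon1 sub0r.
by apply: gam_div => //; case: hG.
Qed.

Lemma gam_mul {R : realType} {disp} {Phi : orderType disp} (Gam : set (mon R Phi)) x y :
  good_group Gam -> Gam x -> Gam y -> Gam (mmul x y).
Proof.
move=> hG hx hy; have -> : mmul x y = mdiv x (minv y).
  by apply/funext => p; rewrite /minv /mdiv /mmul opprK.
by apply: gam_div => //; apply: gam_inv.
Qed.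

Lemma mle_total {R : realType} {disp} {Phi : orderType disp} (Gam : set (mon R Phi)) x y :
  good_group Gam -> Gam x -> Gam y -> mle x y \/ mle y x.
Proof.
move=> hG hx hy.
have [e|[p hp]] : x = y \/ exists p, mdiv y x p != 0.
  case: (pselect (exists p, mdiv y x p != 0)) => [h|n]; [by right|left].
  apply/funext => p; apply/eqP; apply: contraT => h; exfalso; apply: n; exists p.
  by rewrite /mdiv subr_eq0 eq_sym.
  by left; left.
have hh : hahn (mdiv y x) by case: (hG) => h _ _ _; apply: h; apply: gam_div.
have [c [hc Hc]] := hahn_LF hh hp.
case: (ltgtP 0 (mdiv y x c)) => [pos|neg|z].
- by left; right; exists c.
- right; right; exists c; split.
    by apply: (is_LF_neg (conj hc Hc)) => q; rewrite /mdiv opprB.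
  by rewrite /mdiv -opprB oppr_gt0.
- by move: hc; rewrite -z eqxx.
Qed.

Lemma smallb_neg {R : realType} {disp} {Phi : orderType disp} (x z : mon R Phi) c :
  smallb x c -> (forall p, z p = - x p) -> smallb z c.
Proof. by move=> h e p; rewrite e oppr_eq0; apply: h. Qed.

Lemma main_abstract {R : realType} {disp} {Phi : orderType disp} (Gam : set (mon R Phi))
  (th : Phi -> mon R Phi) (alpha : mon R Phi) :
  good_group Gam -> Gam alpha -> (forall f, Gam (th f)) ->
  (forall f g, (g < f)%O -> mgt1 (mdiv (th f) (th g))) ->
  (forall f g, (g < f)%O -> smallb (mdiv (th f) (th g)) f) ->
  ((forall f, mle alpha (th f)) -> (forall u, Gam u -> (forall f, mle u (th f)) -> mle u alpha) -> False) ->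
  exists! psi : Phi, LF (mdiv alpha (th psi)) = Some psi.
Proof.
move=> hG ha thG hA hB hne.
have hahnG : forall x, Gam x -> hahn x by case: hG.
have up : forall p1 p2, (p1 < p2)%O -> is_LF (mdiv alpha (th p2)) p2 ->
    is_LF (mdiv alpha (th p1)) p2.
  move=> p1 p2 lt h.
  by case: (M1 h (hB _ _ lt) (z := mdiv alpha (th p1))) => // p; rewrite /mdiv; ring.
have uniq : forall p1 p2, is_LF (mdiv alpha (th p1)) p1 -> is_LF (mdiv alpha (th p2)) p2 -> p1 = p2.
  move=> p1 p2 h1 h2; case: (ltgtP p1 p2) => // lt.
  - by have := is_LF_uniq h1 (up _ _ lt h2).
  - by have := is_LF_uniq h2 (up _ _ lt h1).
suff [psi hpsi] : exists psi, is_LF (mdiv alpha (th psi)) psi.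
  exists psi; split; first exact: LF_some.
  by move=> q /LF_someE hq; apply: uniq.
case: (pselect (exists psi c, is_LF (mdiv alpha (th psi)) c /\ (psi <= c)%O)).
  move=> [psi [c [hc le]]]; case: (eqVneq psi c) => [e|ne]; first by subst c; exists psi.
  have lt : (psi < c)%O by rewrite lt_neqAle ne.
  exists c.
  have sm : smallb (mdiv (th psi) (th c)) c.
    by apply: (smallb_neg (hB _ _ lt)) => p; rewrite /mdiv opprB.
  by case: (M1 hc sm (z := mdiv alpha (th c))) => // p; rewrite /mdiv; ring.
move=> nex; exfalso.
have hard : forall psi c, is_LF (mdiv alpha (th psi)) c -> (c < psi)%O.
  move=> psi c h; rewrite ltNge; apply/negP => le; apply: nex; by exists psi, c.
have small : forall m, smallb (mdiv alpha (th m)) m.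
  move=> m p hp; have [c hc] := hahn_LF (hahnG _ (gam_div hG ha (thG m))) hp.
  by apply: le_lt_trans (hard _ _ hc); case: hc => _; apply.
apply: hne.
- move=> f; case: (mle_total hG ha (thG f)) => // -[->|[m [hm pm]]]; first exact: mle_refl.
  have hm' : is_LF (mdiv alpha (th f)) m by [].
  have lt := hard _ _ hm'.
  have [n [hn pn]] := hA _ _ lt.
  have e : forall p, mdiv alpha (th m) p = mdiv alpha (th f) p + mdiv (th f) (th m) p.
    by move=> p; rewrite /mdiv; ring.
  have [c [hc _ le _]] := M2 hm pm hn pn e.
  by have := hard _ _ hc; rewrite ltNge le.
- move=> u hu hle; case: (mle_total hG hu ha) => // -[->|[m [hm pm]]]; first exact: mle_refl.
  have e : forall p, mdiv u (th m) p = mdiv u alpha p + mdiv alpha (th m) p.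
    by move=> p; rewrite /mdiv; ring.
  have [hc vc] := M1 hm (small m) e.
  case: (hle m) => [eu|mg].
    by case: hc; rewrite eu /mdiv subrr eqxx.
  have hn : is_LF (mdiv (th m) u) m by apply: (is_LF_neg hc) => p; rewrite /mdiv opprB.
  exfalso; apply: (mgt1_neg hn _ mg).
  by rewrite /mdiv -opprB oppr_lt0 -/(mdiv u (th m) m) vc.
Qed.

Lemma is_LM_uniq {R : realType} {disp} {Phi : orderType disp} (a : ser R Phi) g h :
  is_LM a g -> is_LM a h -> g = h.
Proof. by move=> [hg Hg] [hh Hh]; apply: mle_anti; [apply: Hh|apply: Hg]. Qed.

Lemma LM_eq {R : realType} {disp} {Phi : orderType disp} (a : ser R Phi) g :
  is_LM a g -> LM a = g.
Proof.
move=> h; rewrite /LM; case: pselect => [e|n]; last by exfalso; apply: n; exists g.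
exact: is_LM_uniq (projT2 (cid e)) h.
Qed.

Lemma LM_spec {R : realType} {disp} {Phi : orderType disp} (Gam : set (mon R Phi)) a :
  is_series Gam a -> a <> @szero R _ Phi -> is_LM a (LM a).
Proof.
move=> [_ hw] nz.
have [g ag] : exists g, a g != 0.
  apply: contra_notP nz => n; apply/funext => g; apply/eqP; apply: contraT => h.
  by exfalso; apply: n; exists g.
have [m sm Hm] := hw (ssupp a) (fun _ q => q) (ex_intro _ g ag).
by rewrite (LM_eq (g := m)) //; split.
Qed.

Lemma mono_self {R : realType} {disp} {Phi : orderType disp} (g : mon R Phi) : mono g g = 1.
Proof. by rewrite /mono asboolT. Qed.

Lemma mono_supp {R : realType} {disp} {Phi : orderType disp} (g h : mon R Phi) :
  mono g h != 0 -> h = g.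
Proof. by rewrite /mono; case: asboolP => // _; rewrite eqxx. Qed.

Lemma mono_series {R : realType} {disp} {Phi : orderType disp} (Gam : set (mon R Phi)) g :
  Gam g -> is_series Gam (mono g).
Proof.
move=> hg; split; first by move=> h /mono_supp ->.
move=> A sA [x Ax]; exists g; first by rewrite -(mono_supp (sA _ Ax)).
by move=> y /sA /mono_supp ->; left.
Qed.

Lemma mono_nz {R : realType} {disp} {Phi : orderType disp} (g : mon R Phi) : mono g <> @szero R _ Phi.
Proof. by move=> e; have := mono_self g; rewrite e /szero => /eqP; rewrite eq_sym oner_eq0. Qed.

Lemma LM_mono {R : realType} {disp} {Phi : orderType disp} (g : mon R Phi) : LM (mono g) = g.
Proof.
apply: LM_eq; split; first by rewrite mono_self oner_neq0.
by move=> h /mono_supp ->; left.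
Qed.

Definition Lg {R : realType} {disp} {Phi : orderType disp} (D : ser R Phi -> ser R Phi) (g : mon R Phi) :=
  LMlogder D (mono g).

Lemma Lg_E {R : realType} {disp} {Phi : orderType disp} (D : ser R Phi -> ser R Phi) g :
  Lg D g = mdiv (LM (D (mono g))) g.
Proof. by rewrite /Lg /LMlogder LM_mono. Qed.

Lemma Dmono_nz {R : realType} {disp} {Phi : orderType disp} (Gam : set (mon R Phi)) D g p :
  hardy_type Gam D -> Gam g -> g p != 0 -> D (mono g) <> @szero R _ Phi.
Proof.
move=> [h1 _ _] hg gp e.
have /(h1 _ (mono_series hg)) c := e.
have eg : g = @mon1 R _ Phi by apply: c; rewrite /ssupp /= mono_self oner_neq0.
by move: gp; rewrite eg /mon1 eqxx.
Qed.

Lemma Dmono_LM {R : realType} {disp} {Phi : orderType disp} (Gam : set (mon R Phi)) D g p :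
  series_derivation Gam D -> hardy_type Gam D -> Gam g -> g p != 0 ->
  is_LM (D (mono g)) (LM (D (mono g))) /\ Gam (LM (D (mono g))).
Proof.
move=> hD hH hg gp.
have ser : is_series Gam (D (mono g)) by case: hD => h _ _ _; apply/h/mono_series.
have hl := LM_spec ser (Dmono_nz hH hg gp).
by split => //; case: ser => s _; apply: s; case: hl.
Qed.

Lemma Lg_gam {R : realType} {disp} {Phi : orderType disp} (Gam : set (mon R Phi)) D g p :
  good_group Gam -> series_derivation Gam D -> hardy_type Gam D -> Gam g -> g p != 0 ->
  Gam (Lg D g).
Proof.
move=> hG hD hH hg gp; rewrite Lg_E; apply: gam_div => //.
by case: (Dmono_LM hD hH hg gp).
Qed.

Lemma fund_LF {R : realType} {disp} {Phi : orderType disp} (f : Phi) :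
  is_LF (fund R f) f /\ fund R f f = 1.
Proof.
split; [split|]; rewrite /fund ?eqxx ?oner_eq0 //.
by move=> p; case: (eqVneq p f) => [->|]; rewrite ?eqxx // lexx.
Qed.

Lemma theta_L {R : realType} {disp} {Phi : orderType disp} (Gam : set (mon R Phi)) D f :
  good_group Gam -> series_derivation Gam D -> hardy_type Gam D ->
  theta D f = Lg D (fund R f).
Proof.
move=> hG hD hH; rewrite Lg_E /theta.
have [hf _] := fund_LF (R := R) f.
have gf : Gam (fund R f) by case: hG.
have [[hl Hl] _] := Dmono_LM hD hH gf (hf.1) .
apply: LM_eq; split.
  by rewrite /sdivm; have -> : mmul (mdiv (LM (D (mono (fund R f)))) (fund R f)) (fund R f) = LM (D (mono (fund R f)))
    by apply/funext => p; rewrite /mmul /mdiv; ring.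
move=> h; rewrite /sdivm => /Hl [e|m].
  by left; apply/funext => p; rewrite /mdiv -e /mmul; ring.
right; have -> : mdiv (mdiv (LM (D (mono (fund R f)))) (fund R f)) h =
  mdiv (LM (D (mono (fund R f)))) (mmul h (fund R f)).
  by apply/funext => p; rewrite /mdiv /mmul; ring.
exact: m.
Qed.

Lemma HD3m {R : realType} {disp} {Phi : orderType disp} (Gam : set (mon R Phi)) D g h :
  hardy_type Gam D -> Gam g -> Gam h ->
  mlt (mabs h) (mabs g) -> mlt (@mon1 R _ Phi) (mabs h) ->
  mle (Lg D h) (Lg D g) /\ (Lg D g = Lg D h <-> LF g = LF h).
Proof.
case=> _ _ h3 hg hh.
have := h3 (mono g) (mono h) (mono_series hg) (mono_series hh) (@mono_nz R _ Phi g) (@mono_nz R _ Phi h).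
by rewrite !LM_mono.
Qed.

Lemma mabs_pos {R : realType} {disp} {Phi : orderType disp} (x : mon R Phi) :
  mgt1 x -> mabs x = x.
Proof. by move=> m; rewrite /mabs asboolT. Qed.

Lemma mabs_LF {R : realType} {disp} {Phi : orderType disp} (x : mon R Phi) f :
  is_LF x f -> is_LF (mabs x) f /\ 0 < mabs x f.
Proof.
move=> h; rewrite /mabs; case: asboolP => [[c [hc pc]]|n].
  by have := is_LF_uniq h hc => e; subst c.
have xn : x f < 0.
  case: (ltgtP (x f) 0) => // [pos|z]; first by exfalso; apply: n; exists f.
  by case: h; rewrite z eqxx.
split; first by apply: (is_LF_neg h).
by rewrite /minv oppr_gt0.
Qed.

Lemma mabs_gam {R : realType} {disp} {Phi : orderType disp} (Gam : set (mon R Phi)) x :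
  good_group Gam -> Gam x -> Gam (mabs x).
Proof. by move=> hG hx; rewrite /mabs; case: asboolP => _ //; apply: gam_inv. Qed.

Lemma mlt1 {R : realType} {disp} {Phi : orderType disp} (x : mon R Phi) f :
  is_LF x f -> 0 < x f -> mlt (@mon1 R _ Phi) x.
Proof.
move=> h p; split; first by apply: mgt1_mle; exists f.
by move=> e; move: p; rewrite -e /mon1 ltxx.
Qed.

Lemma Lcomp_lt {R : realType} {disp} {Phi : orderType disp} (Gam : set (mon R Phi)) D g h f :
  hardy_type Gam D -> Gam g -> Gam h -> is_LF g f -> is_LF h f ->
  mlt (mabs h) (mabs g) -> Lg D g = Lg D h.
Proof.
move=> hH hg hh lg lh lt.
have [la pa] := mabs_LF lh.
have [_ e] := HD3m hH hg hh lt (mlt1 la pa).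
by apply/e; rewrite (LF_some lg) (LF_some lh).
Qed.

Lemma Lcomp {R : realType} {disp} {Phi : orderType disp} (Gam : set (mon R Phi)) D g h f :
  good_group Gam -> hardy_type Gam D -> Gam g -> Gam h -> is_LF g f -> is_LF h f ->
  Lg D g = Lg D h.
Proof.
move=> hG hH hg hh lg lh.
have [ag pg] := mabs_LF lg; have [ah ph] := mabs_LF lh.
have gen : forall g h, Gam g -> Gam h -> is_LF g f -> is_LF h f ->
    mle (mabs h) (mabs g) -> mabs h <> mabs g -> Lg D g = Lg D h.
  move=> g' h' hg' hh' lg' lh' le ne; exact: (Lcomp_lt hH hg' hh' lg' lh').
case: (mle_total hG (mabs_gam hG hg) (mabs_gam hG hh)) => le.
- case: (pselect (mabs g = mabs h)) => [e|ne]; last first.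
    by apply/esym/(gen h g) => // e; apply: ne.
  pose k := mmul (mabs g) (mabs g).
  have hk : Gam k by apply: gam_mul => //; apply: mabs_gam.
  have lk : is_LF k f /\ k f = mabs g f + mabs g f.
    split => //; split; first by rewrite /k /mmul gt_eqF // addr_gt0.
    by move=> p; rewrite /k /mmul -mulr2n mulrn_eq0 /= => /(proj2 ag).
  have mk : mgt1 k by exists f; split; [exact: lk.1|rewrite lk.2 addr_gt0].
  have lt : forall x, Gam x -> is_LF x f -> mabs x = mabs g -> Lg D k = Lg D x.
    move=> x hx lx ex; apply: (gen k x hk hx lk.1 lx); rewrite ex (mabs_pos mk).
      right; have -> : mdiv k (mabs g) = mabs g by apply/funext => p; rewrite /k /mdiv /mmul addrK.
      by exists f.
    move=> e'; have := congr1 (fun z => z f) e'; rewrite /k /mmul /= => h0.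
    by move: pg; rewrite {1}h0; lra.
  by rewrite -(lt g) // (lt h) // -e.
- case: (pselect (mabs h = mabs g)) => [e|ne]; last by apply: (gen g h).
  pose k := mmul (mabs g) (mabs g).
  have hk : Gam k by apply: gam_mul => //; apply: mabs_gam.
  have lk : is_LF k f /\ k f = mabs g f + mabs g f.
    split => //; split; first by rewrite /k /mmul gt_eqF // addr_gt0.
    by move=> p; rewrite /k /mmul -mulr2n mulrn_eq0 /= => /(proj2 ag).
  have mk : mgt1 k by exists f; split; [exact: lk.1|rewrite lk.2 addr_gt0].
  have lt : forall x, Gam x -> is_LF x f -> mabs x = mabs g -> Lg D k = Lg D x.
    move=> x hx lx ex; apply: (gen k x hk hx lk.1 lx); rewrite ex (mabs_pos mk).
      right; have -> : mdiv k (mabs g) = mabs g by apply/funext => p; rewrite /k /mdiv /mmul addrK.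
      by exists f.
    move=> e'; have := congr1 (fun z => z f) e'; rewrite /k /mmul /= => h0.
    by move: pg; rewrite {1}h0; lra.
  by rewrite -(lt g) // (lt h).
Qed.

Lemma gam_fund {R : realType} {disp} {Phi : orderType disp} (Gam : set (mon R Phi)) f :
  good_group Gam -> Gam (fund R f).
Proof. by case. Qed.

Lemma fund_mgt1 {R : realType} {disp} {Phi : orderType disp} (f : Phi) : mgt1 (fund R f).
Proof. have [h e] := fund_LF (R := R) f; exists f; split => //; rewrite e ltr01 //. Qed.

Lemma fund_lt {R : realType} {disp} {Phi : orderType disp} (x : mon R Phi) f c :
  is_LF x c -> 0 < x c -> (f < c)%O -> mlt (fund R f) x.
Proof.
move=> lx px fc.
have [hf ef] := fund_LF (R := R) f.
have sm : smallb (minv (fund R f)) c.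
  move=> p; rewrite /minv oppr_eq0 => /(proj2 hf) pf; exact: le_lt_trans pf fc.
have [l v] := M1 lx sm (z := mdiv x (fund R f)) (fun p => erefl).
split; first by right; exists c; split => //; rewrite v.
have cf : (c == f) = false by apply/negP => /eqP cf; move: fc; rewrite cf ltxx.
by move=> e; move: px; rewrite -e /fund /= cf ltxx.
Qed.

Lemma F3 {R : realType} {disp} {Phi : orderType disp} (Gam : set (mon R Phi)) D g f c :
  good_group Gam -> series_derivation Gam D -> hardy_type Gam D ->
  Gam g -> is_LF g c -> (f <= c)%O -> mle (theta D f) (Lg D g).
Proof.
move=> hG hD hH hg lg fc; rewrite (theta_L _ hG hD hH).
case: (eqVneq f c) => [e|ne].
  subst c; rewrite (Lcomp hG hH hg (gam_fund f hG) lg (fund_LF f).1); exact: mle_refl.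
have lt : (f < c)%O by rewrite lt_neqAle ne.
have [la pa] := mabs_LF lg.
have [hf ef] := fund_LF (R := R) f.
have := HD3m hH hg (gam_fund f hG); rewrite (mabs_pos (fund_mgt1 f)).
by move=> /(_ (fund_lt la pa lt) (mlt1 hf (ltac:(by rewrite ef ltr01)))) [].
Qed.

Lemma thA {R : realType} {disp} {Phi : orderType disp} (Gam : set (mon R Phi)) D f g :
  good_group Gam -> series_derivation Gam D -> hardy_type Gam D ->
  (g < f)%O -> mgt1 (mdiv (theta D f) (theta D g)).
Proof.
move=> hG hD hH lt.
have [hf ef] := fund_LF (R := R) f; have [hg eg] := fund_LF (R := R) g.
have := HD3m hH (gam_fund f hG) (gam_fund g hG).
rewrite !(mabs_pos (fund_mgt1 _)) -!(theta_L _ hG hD hH).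
move=> /(_ (fund_lt hf (ltac:(by rewrite ef ltr01)) lt) (mlt1 hg (ltac:(by rewrite eg ltr01)))).
move=> [[e|m] h]; last exact: m.
move: h; rewrite e (LF_some hf) (LF_some hg) => -[/(_ erefl) [fg] _].
by move: lt; rewrite fg ltxx.
Qed.

Lemma thB {R : realType} {disp} {Phi : orderType disp} (Gam : set (mon R Phi)) D f g :
  good_group Gam -> series_derivation Gam D -> hardy_type Gam D ->
  (g < f)%O -> smallb (mdiv (theta D f) (theta D g)) f.
Proof.
move=> hG hD hH lt p hp; rewrite ltNge; apply/negP => fp.
have thG : forall h, Gam (theta D h).
  move=> h; rewrite (theta_L _ hG hD hH).
  exact: (Lg_gam hG hD hH (gam_fund h hG) (fund_LF h).1.1).
have [c [lc pc]] := thA hG hD hH lt.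
have fc : (f <= c)%O by apply: le_trans fp (lc.2 _ hp).
set u := mdiv (theta D g) (theta D f).
have hu : Gam u by apply: gam_div.
have lu : is_LF u c by apply: (is_LF_neg lc) => q; rewrite /u /mdiv opprB.
set v := mdiv (minv (fund R g)) (fund R g).
have hv : Gam v by apply: gam_div; [|apply: gam_inv|]; rewrite //; apply: gam_fund.
have [hfg efg] := fund_LF (R := R) g.
have vg : v g = -2 by rewrite /v /mdiv /minv efg; lra.
have lv : is_LF v g.
  split; first by rewrite vg oppr_eq0 pnatr_eq0.
  move=> q; rewrite /v /mdiv /minv => nz; apply: (proj2 hfg).
  case: (eqVneq (fund R g q) 0) => [h0|//].
  by rewrite h0 oppr0 addr0 eqxx in nz.
have gc : (g < c)%O by apply: lt_le_trans lt fc.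
have mle_uv : mle u v.
  right; have sm : smallb v c by move=> q /(proj2 lv) qg; apply: le_lt_trans qg gc.
  have [l e] := M1 lc sm (z := mdiv v u) (fun q => ltac:(rewrite /u /mdiv; ring)).
  by exists c; split => //; rewrite e.
have unz : u <> @mon1 R _ Phi by move=> e; case: lu; rewrite e /mon1 eqxx.
have vnz : v <> @mon1 R _ Phi by move=> e; case: lv; rewrite e /mon1 eqxx.
have hd : mle (LM (D (mono u))) (LM (D (mono v))).
  case: hH => _ h2 _.
  have := h2 (mono u) (mono v) (mono_series hu) (mono_series hv)
    (@mono_nz R _ Phi u) (@mono_nz R _ Phi v); rewrite !LM_mono.
  by move=> /(_ unz vnz) [hf _]; apply: hf; rewrite /sle !LM_mono.
have LMu : LM (D (mono u)) = mmul u (Lg D u).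
  by rewrite Lg_E; apply/funext => q; rewrite /mmul /mdiv; ring.
have LMv : LM (D (mono v)) = mmul v (Lg D v).
  by rewrite Lg_E; apply/funext => q; rewrite /mmul /mdiv; ring.
have Lv : Lg D v = theta D g.
  by rewrite (theta_L _ hG hD hH); apply: (Lcomp hG hH hv (gam_fund g hG) lv hfg).
have Lu := F3 hG hD hH hu lu fc.
rewrite LMu LMv Lv in hd; have := mle_trans (mle_transl u Lu) hd.
have -> : mmul u (theta D f) = theta D g by apply/funext => q; rewrite /u /mmul /mdiv; ring.
move=> [e|m].
  have h0 : theta D g g = v g + theta D g g by rewrite {1}e.
  by move: h0; rewrite vg; lra.
have : mdiv (mmul v (theta D g)) (theta D g) = v by apply/funext => q; rewrite /mmul /mdiv; ring.
move=> ev; rewrite ev in m.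
by apply: (mgt1_neg lv _ m); rewrite vg; lra.
Qed.

Theorem mainTheorem4 (R : realType) (disp : Order.disp_t) (Phi : orderType disp)
    (Gam : set (mon R Phi)) (D : ser R Phi -> ser R Phi)
    (hGam : good_group Gam)
    (hD : series_derivation Gam D) (hH : hardy_type Gam D)
    (alpha : mon R Phi) (halpha : Gam alpha)
    (hne : forall t, is_theta_hat Gam D t -> alpha <> t) :
  exists! psi : Phi, LF (mdiv alpha (theta D psi)) = Some psi.
Proof.
apply: (main_abstract hGam halpha).
- move=> h; rewrite (theta_L _ hGam hD hH).
  exact: (Lg_gam hGam hD hH (gam_fund h hGam) (fund_LF h).1.1).
- by move=> f g lt; apply: (thA hGam hD hH lt).
- by move=> f g lt; apply: (thB hGam hD hH lt).
- by move=> h1 h2; apply: (hne alpha) => //; split.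
Qed.
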